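(* Let $\widehat\pi$ be the policy computed by ALG-CE under the good event $E$. Then $$\varepsilon(\widehat\pi)=O\left(\sqrt{\max\left\{\lambda,\frac{m_0}{p_+}\right\}\frac{\log(NT)}{T}}\right).$$
   Context: Two-stage causal MDP. Start state $0$, intermediate states $[k]$, terminal state. At each state $i\in\{0,\dots,k\}$: independent Bernoulli variables $X^i_1,\dots,X^i_n$, $q^i_j=\mathbb{P}\{X^i_j=1\}$ unknown; atomic interventions $\mathcal{I}_i=\{do()\}\cup\{do(X^i_j=0),do(X^i_j=1):j\in[n]\}$, $N=2n+1$ ($do(X^i_j=x)$ sets $X^i_j=x$, other variables drawn independently). Performing $a\in\mathcal{I}_0$ at state $0$ leads to $i\in[k]$ with unknown probability $P_{(a,i)}$ (depending stochastically on the realized $X^0$-values); $P\in\mathbb{R}^{N\times k}$, $p_+=\min\{P_{(a,i)}>0\}$. At state $i\in[k]$, after an intervention all $X^i_j$ and a reward $R_i\in\{0,1\}$ (law depending on the $X^i$-values) are observed; $\mathbb{E}[R_i\mid a]$ is the expected reward under $a\in\mathcal{I}_i$. A policy $\pi$ picks $\pi(0)\in\mathcal{I}_0$, $\pi(i)\in\mathcal{I}_i$; value $V(\pi)=\sum_iP_{(\pi(0),i)}\mathbb{E}[R_i\mid\pi(i)]$; $\pi^*$ maximizes $V$; $\varepsilon(\pi)=V(\pi^* )-V(\pi)$. Causal parameters: with $\bar q^i_j=\min(q^i_j,1-q^i_j)$ sorted as $\bar q^i_{(1)}\le\dots\le\bar q^i_{(n)}$, $m_i=\max\{j:\bar q^i_{(j)}<1/j\}$;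 $\mathcal{I}_{m_i}$ is the set of interventions setting a variable with $\bar q^i_{(j)}<1/j$ to its less likely value; $M=\mathrm{diag}(m_1,\dots,m_k)$. Frequency vectors: $f\in\mathbb{R}^N$, $f\ge0$, $\sum f_a=1$; $x^{\circ-1/2}$ is entrywise $x_i^{-1/2}$; $\lambda=\min_f\|PM^{1/2}(P^\top f)^{\circ-1/2}\|_\infty^2$. Algorithm ALG-CE with budget $T$ (estimates are empirical frequencies/means). Phase 1 ($T/3$ rounds): $T/6$ rounds of $do()$ at state $0$, giving estimates of $q^0_j$, $\widehat m_0$, $\mathcal{I}_{m_0}$, and $\widehat P_{(a,i)}$ for $a\notin\mathcal{I}_{m_0}$ (frequency of reaching $i$ among rounds whose $X^0$-values agree with $a$); then each $a\in\mathcal{I}_{m_0}$ is performed $T/(6|\mathcal{I}_{m_0}|)$ times to get $\widehat P_{(a,i)}$. Phase 2: $\tilde f\in\arg\max_f\min_i(\widehat P^\top f)_i$. Phase 3 ($T/3$ rounds): each $a\in\mathcal{I}_0$ performed $\frac12(\tilde f(a)+\frac1N)\frac T3$ times with $do()$ at the reached state, giving $\widehat m_i$, $\widehat M=\mathrm{diag}(\widehat m_1,\dots,\widehat m_k)$. Phase 4: $\widehat f^*\in\arg\min_f\|\widehat P\widehat M^{1/2}(\widehat P^\top f)^{\circ-1/2}\|_\infty$. Phase 5 ($T/3$ rounds): with $h(a)=\frac13(\widehat f^*(a)+\tilde f(a)+\frac1N)$, each $a$ performed $h(a)T/6$ times with $do()$ at the reached state (estimating $\mathcal{I}_{m_i}$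 and $\widehat{\mathcal{R}}_{(b,i)}$ for $b\notin\mathcal{I}_{m_i}$ from rounds whose $X^i$-values agree with $b$), then $h(a)T/6$ times with round-robin over $b\in\mathcal{I}_{m_i}$ at the reached state $i$ (estimating $\widehat{\mathcal{R}}_{(b,i)}$ for $b\in\mathcal{I}_{m_i}$). Output $\widehat\pi(i)\in\arg\max_b\widehat{\mathcal{R}}_{(b,i)}$, $\widehat\pi(0)\in\arg\max_a\sum_i\widehat P_{(a,i)}\widehat{\mathcal{R}}_{(\widehat\pi(i),i)}$. Good event $E=E_1\cap\dots\cap E_5$: ($E_1$) for every $a\in\mathcal{I}_0$, the transition estimates formed in each of Phases 1, 3, 5 satisfy $\sum_i|\widehat P_{(a,i)}-P_{(a,i)}|\le p_+/3$; ($E_2$) $\widehat m_0\in[\frac23m_0,2m_0]$; ($E_3$) $\widehat m_i\in[\frac23m_i,2m_i]$ for all $i\in[k]$ (for the estimates in Phases 3 and 5); ($E_4$) for all $a\in\mathcal{I}_0$, the Phase 1 estimates satisfy $\sum_i|\widehat P_{(a,i)}-P_{(a,i)}|\le\eta'$ with $\eta'=\sqrt{\frac{150m_0}{Tp_+}\log\frac{3T}{k}}$; ($E_5$) $|\mathbb{E}[R_i\mid a]-\widehat{\mathcal{R}}_{(a,i)}|\le\widehat\eta_i$ for all $i\in[k]$, $a\in\mathcal{I}_i$, with $\widehat\eta_i=\sqrt{\frac{27\widehat m_i}{T(\widehat P^\top\widehat f^* )_i}\log(2TN)}$. Here $\widehat P$ and $\widehat M$ denote the Phase 1 and Phase 3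 estimates. *)

(* Defs.v *)
From HB Require Import structures.
From mathcomp Require Import all_boot all_order all_algebra.
From mathcomp Require Import boolp classical_sets reals exp.

Set Implicit Arguments.
Unset Strict Implicit.
Unset Printing Implicit Defensive.

Import Order.TTheory GRing.Theory Num.Theory.
Local Open Scope ring_scope.
Local Open Scope classical_set_scope.

Section CausalMDP.
Variable R : realType.

(* Atomic interventions on n binary variables:
   None = do(),  Some (j, v) = do(X_j = v).  There are 2n+1 of them. *)
Definition interv (n : nat) : finType := option ('I_n * bool).

Definition Nint (n : nat) : nat := (2 * n + 1)%N.

Definition assignment (n : nat) : finType := {ffun 'I_n -> bool}.

(* Probability of realisation x of (X_1..X_n) under intervention a, when the
   X_j are independent Bernoulli(q j) (the intervened variable is set). *)
Definition prob_under (n : nat) (q : 'I_n -> R) (a : interv n)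
    (x : assignment n) : R :=
  \prod_(j < n)
    match a with
    | Some (l, v) =>
        if l == j then (if x j == v then 1 else 0)
        else (if x j then q j else 1 - q j)
    | None => if x j then q j else 1 - q j
    end.

Definition trans (n k : nat) (q0 : 'I_n -> R)
    (K : assignment n -> 'I_k -> R) (a : interv n) (i : 'I_k) : R :=
  \sum_(x : assignment n) prob_under q0 a x * K x i.

(* E[R_i | a], where r x = P{R_i = 1 | X^i = x}. *)
Definition exp_reward (n : nat) (q : 'I_n -> R) (r : assignment n -> R)
    (a : interv n) : R :=
  \sum_(x : assignment n) prob_under q a x * r x.

(* Policy: (pi(0), (pi(i))_{i in [k]}) ; value V(pi). *)
Definition value (n k : nat) (P : interv n -> 'I_k -> R)
    (ER : 'I_k -> interv n -> R) (pi0 : interv n) (pi : 'I_k -> interv n) : R :=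
  \sum_(i < k) P pi0 i * ER i (pi i).

(* The causal parameter m: qbar_j = min(q_j, 1 - q_j), sorted increasingly,
   m = max { j : qbar_(j) < 1/j } (0 if no such j, only possible for n = 0). *)
Definition qbar_sorted (n : nat) (q : 'I_n -> R) : seq R :=
  sort <=%R [seq Num.min (q j) (1 - q j) | j <- enum 'I_n].

Definition mpar (n : nat) (q : 'I_n -> R) : nat :=
  \max_(j < n.+1 | (0 < j)%N && (nth 1 (qbar_sorted q) j.-1 < (j%:R)^-1)) j.

(* p_+ = min { P_(a,i) : P_(a,i) > 0 } (all entries are <= 1) *)
Definition pplus (n k : nat) (P : interv n -> 'I_k -> R) : R :=
  \big[Num.min/1]_(ai : interv n * 'I_k | 0 < P ai.1 ai.2) P ai.1 ai.2.

Definition freq (n : nat) (f : interv n -> R) : Prop :=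
  (forall a, 0 <= f a) /\ \sum_a f a = 1.

Definition Ptf (n k : nat) (P : interv n -> 'I_k -> R) (f : interv n -> R)
    (i : 'I_k) : R :=
  \sum_a P a i * f a.

(* f gives a finite value to || P M^{1/2} (P^T f)^{o -1/2} ||_oo, i.e. no
   entry 0^{-1/2} = +oo is multiplied by a positive P_(a,i). *)
Definition admissible (n k : nat) (P : interv n -> 'I_k -> R)
    (f : interv n -> R) : Prop :=
  forall a i, 0 < P a i -> 0 < Ptf P f i.

(* || P M^{1/2} (P^T f)^{o -1/2} ||_oo  (meaningful for admissible f) *)
Definition Phi (n k : nat) (P : interv n -> 'I_k -> R) (m : 'I_k -> nat)
    (f : interv n -> R) : R :=
  \big[Num.max/0]_a
    `| \sum_(i < k) P a i * Num.sqrt (m i)%:R * (Num.sqrt (Ptf P f i))^-1 |.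

(* lambda = min_f || P M^{1/2} (P^T f)^{o -1/2} ||_oo^2
   (non-admissible f have value +oo and are discarded) *)
Definition lambda (n k : nat) (P : interv n -> 'I_k -> R) (m : 'I_k -> nat) : R :=
  inf [set y | exists f, freq f /\ admissible P f /\ y = Phi P m f ^+ 2].

Definition minPtf (n k : nat) (P : interv n -> 'I_k -> R) (f : interv n -> R) : R :=
  \big[Num.min/1]_(i < k) Ptf P f i.

Definition l1dist (n k : nat) (Ph P : interv n -> 'I_k -> R) (a : interv n) : R :=
  \sum_(i < k) `| Ph a i - P a i |.

End CausalMDP.

(* Main.v *)
Require Import Defs.
From HB Require Import structures.
From mathcomp Require Import all_boot all_order all_algebra.
From mathcomp Require Import boolp classical_sets reals exp.
From mathcomp Require Import ring lra zify.
Import Order.TTheory GRing.Theory Num.Theory.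
Local Open Scope ring_scope.

Section Aux.
Variable R : realType.

Lemma prob_under_ge0 n (q : 'I_n -> R) a x :
  (forall j, 0 <= q j <= 1) -> 0 <= prob_under q a x.
Proof.
move=> hq; rewrite /prob_under; apply: prodr_ge0 => j _.
have /andP[h0 h1] := hq j.
have h2 : 0 <= 1 - q j by rewrite subr_ge0.
case: a => [[l v]|]; last by case: (x j).
by case: (l == j); [case: (x j == v)|case: (x j)].
Qed.

Lemma trans_ge0 n k (q0 : 'I_n -> R) (K : assignment n -> 'I_k -> R) a i :
  (forall j, 0 <= q0 j <= 1) -> (forall x i, 0 <= K x i) -> 0 <= trans q0 K a i.
Proof.
move=> hq hK; apply: sumr_ge0 => x _; apply: mulr_ge0; last exact: hK.
exact: prob_under_ge0.
Qed.

Lemma pplus_ge0 n k (P : interv n -> 'I_k -> R) : 0 <= pplus P.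
Proof.
rewrite /pplus; apply: le_bigmin => //= ai; exact: ltW.
Qed.

Lemma pplus_le n k (P : interv n -> 'I_k -> R) a i : 0 < P a i -> pplus P <= P a i.
Proof.
move=> h; rewrite /pplus.
exact: (@bigmin_le_cond _ _ _ 1 (a, i) (fun ai => 0 < P ai.1 ai.2) (fun ai => P ai.1 ai.2)).
Qed.

Lemma term_le_l1 n k (P1 P : interv n -> 'I_k -> R) a i :
  `|P1 a i - P a i| <= l1dist P1 P a.
Proof.
rewrite /l1dist (bigD1 i) //= lerDl; apply: sumr_ge0 => j _; exact: normr_ge0.
Qed.

Lemma entry_bounds n k (P1 P : interv n -> 'I_k -> R) a i :
  (forall a i, 0 <= P a i) -> (forall a i, 0 <= P1 a i) ->
  (forall a i, 0 < P1 a i -> 0 < P a i) ->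
  l1dist P1 P a <= pplus P / 3 ->
  2 / 3 * P a i <= P1 a i /\ P1 a i <= 4 / 3 * P a i.
Proof.
move=> hP hP1 hpos hl.
have [Pgt|Ple] := ltP 0 (P a i).
  have h1 := @term_le_l1 _ _ P1 P a i.
  have h2 := @pplus_le _ _ P a i Pgt.
  have := le_trans h1 hl; rewrite ler_norml => /andP[h3 h4].
  split; lra.
have P0 : P a i = 0 by apply/eqP; rewrite eq_le Ple hP.
have P10 : P1 a i = 0.
  apply/eqP; rewrite eq_le hP1 andbT; rewrite leNgt; apply/negP => /hpos.
  by rewrite P0 ltxx.
rewrite P0 P10 mulr0.
by rewrite mulr0.
Qed.

End Aux.


Section Aux2.
Variable R : realType.

Lemma term_cmp (p p1 u u1 t t1 : R) : 0 <= p -> 0 <= p1 -> p1 <= 4/3 * p ->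
  0 <= u1 -> u1 <= 2 * u -> 0 < t -> 2/3 * t <= t1 ->
  p1 * Num.sqrt u1 * (Num.sqrt t1)^-1 <= 3 * (p * Num.sqrt u * (Num.sqrt t)^-1).
Proof.
move=> hp hp1 hp1p hu1 hu1u ht htt.
have ht1 : 0 < t1 by lra.
have hu : 0 <= u by lra.
set s := Num.sqrt t; set s1 := Num.sqrt t1; set a := Num.sqrt u; set a1 := Num.sqrt u1.
have s0 : 0 < s by rewrite sqrtr_gt0.
have s10 : 0 < s1 by rewrite sqrtr_gt0.
have a0 : 0 <= a by apply: sqrtr_ge0.
have a10 : 0 <= a1 by apply: sqrtr_ge0.
have es : s ^+ 2 = t by rewrite sqr_sqrtr // ltW.
have es1 : s1 ^+ 2 = t1 by rewrite sqr_sqrtr // ltW.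
have ea : a ^+ 2 = u by rewrite sqr_sqrtr.
have ea1 : a1 ^+ 2 = u1 by rewrite sqr_sqrtr.
have key : p1 * a1 * s <= 3 * p * a * s1.
  rewrite -ler_sqr ?nnegrE; last first.
  - by rewrite !mulr_ge0 // ltW.
  - by rewrite !mulr_ge0 // ltW.
  rewrite !exprMn es es1 ea ea1.
  have hA : p1 ^+ 2 <= 16/9 * p ^+ 2.
    have : p1 ^+ 2 <= (4/3 * p) ^+ 2 by rewrite ler_sqr ?nnegrE //; lra.
    by rewrite exprMn; move/le_trans; apply; rewrite ler_wpM2r ?exprn_ge0 //; lra.
  have hB : p1 ^+ 2 * u1 * t <= (16/9 * p ^+ 2) * (2 * u) * (3/2 * t1).
    apply: ler_pM; [by rewrite mulr_ge0 ?exprn_ge0 | exact: ltW | | lra].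
    apply: ler_pM => //; exact: exprn_ge0.
  apply: (le_trans hB).
  have hp2 : 0 <= p ^+ 2 by apply: exprn_ge0.
  have : 0 <= p ^+ 2 * u * t1 by rewrite !mulr_ge0 // ltW.
  set X := p ^+ 2 * u * t1.
  have -> : 16 / 9 * p ^+ 2 * (2 * u) * (3 / 2 * t1) = 16/3 * X by rewrite /X; field.
  have -> : 3 ^+ 2 * p ^+ 2 * u * t1 = 9 * X by rewrite /X; ring.
  lra.
rewrite ler_pdivrMr //.
have -> : 3 * (p * a / s) * s1 = (3 * p * a * s1) / s by ring.
by rewrite ler_pdivlMr.
Qed.

End Aux2.


Section Aux3.
Variable R : realType.
Variables (n k : nat).
Implicit Types (P Q : interv n -> 'I_k -> R) (f : interv n -> R).

Lemma Ptf_scale (c : R) P (P1 : interv n -> 'I_k -> R) f i : 0 <= c ->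
  (forall a, c * P a i <= P1 a i) -> (forall a, 0 <= f a) ->
  c * Ptf P f i <= Ptf P1 f i.
Proof.
move=> hc h hf; rewrite /Ptf mulr_sumr; apply: ler_sum => a _.
by rewrite mulrA ler_wpM2r.
Qed.

Lemma Ptf_ge0 P f i : (forall a i, 0 <= P a i) -> (forall a, 0 <= f a) -> 0 <= Ptf P f i.
Proof. by move=> hP hf; apply: sumr_ge0 => a _; rewrite mulr_ge0. Qed.

Lemma Phi_ge0 P (m : 'I_k -> nat) f : 0 <= Phi P m f.
Proof.
rewrite /Phi; apply: (big_ind (fun x => 0 <= x)) => //.
  by move=> x y hx hy; rewrite le_max hx.

Qed.

Lemma sum_le_Phi P (m : 'I_k -> nat) f a :
  \sum_(i < k) P a i * Num.sqrt (m i)%:R * (Num.sqrt (Ptf P f i))^-1 <= Phi P m f.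
Proof.
apply: (le_trans (ler_norm _)); rewrite /Phi.
exact: (@le_bigmax _ _ _ 0 (fun a => `| \sum_(i < k) P a i * Num.sqrt (m i)%:R * (Num.sqrt (Ptf P f i))^-1 |) a).
Qed.


Lemma Phi_cmp P (P1 : interv n -> 'I_k -> R) (m mh : 'I_k -> nat) f :
  (forall a i, 0 <= P a i) -> (forall a i, 0 <= P1 a i) ->
  (forall a i, 0 < P1 a i -> 0 < P a i) ->
  (forall a i, 2 / 3 * P a i <= P1 a i /\ P1 a i <= 4 / 3 * P a i) ->
  (forall i, ((mh i)%:R : R) <= 2 * (m i)%:R) ->
  (forall a, 0 <= f a) -> admissible P f ->
  admissible P1 f /\ Phi P1 mh f <= 3 * Phi P m f.
Proof.
move=> hP hP1 hpos hb hm hf adm.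
have hlb : forall i, 2/3 * Ptf P f i <= Ptf P1 f i.
  move=> i; apply: Ptf_scale => // [|a]; [lra|exact: (hb a i).1].
have adm1 : admissible P1 f.
  move=> a i /hpos /adm h; have := hlb i; lra.
split => //.
rewrite /Phi; apply/bigmax_leP; split.
  by rewrite mulr_ge0 // Phi_ge0.
move=> a _.
rewrite ger0_norm; last first.
  apply: sumr_ge0 => i _; rewrite !mulr_ge0 ?invr_ge0 ?sqrtr_ge0 //.
apply: (le_trans (y := 3 * \sum_(i < k) P a i * Num.sqrt (m i)%:R * (Num.sqrt (Ptf P f i))^-1)); last first.
  by rewrite ler_wpM2l // sum_le_Phi.
rewrite mulr_sumr; apply: ler_sum => i _.
have [Pgt|Ple] := ltP 0 (P a i).
  apply: term_cmp => //; first exact: (hb a i).2.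
  exact: adm Pgt.
have P10 : P1 a i = 0.
  apply/eqP; rewrite eq_le hP1 andbT leNgt; apply/negP => /hpos h.
  by move: (lt_le_trans h Ple); rewrite ltxx.
rewrite P10 !mul0r; rewrite !mulr_ge0 ?invr_ge0 ?sqrtr_ge0 //.
Qed.

Lemma lambda_bound P (P1 : interv n -> 'I_k -> R) (m mh : 'I_k -> nat) fst :
  (forall a i, 0 <= P a i) -> (forall a i, 0 <= P1 a i) ->
  (forall a i, 0 < P1 a i -> 0 < P a i) ->
  (forall a i, 2 / 3 * P a i <= P1 a i /\ P1 a i <= 4 / 3 * P a i) ->
  (forall i, ((mh i)%:R : R) <= 2 * (m i)%:R) ->
  freq fst -> admissible P1 fst ->
  (forall f : interv n -> R, freq f -> admissible P1 f -> Phi P1 mh fst <= Phi P1 mh f) ->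
  0 <= lambda P m /\ Phi P1 mh fst <= 3 * Num.sqrt (lambda P m).
Proof.
move=> hP hP1 hpos hb hm hfst adm1 opt.
have hf0 := hfst.1.
have admP : admissible P fst.
  move=> a i Pgt.
  have h1 : 0 < P1 a i by have := (hb a i).1; lra.
  have h2 := adm1 a i h1.
  have h3 : 3/4 * Ptf P1 fst i <= Ptf P fst i.
    apply: Ptf_scale => // [|a']; first lra.
    have := (hb a' i).2; lra.
  lra.
have key : Phi P1 mh fst ^+ 2 / 9 <= lambda P m.
  rewrite /lambda; apply: lb_le_inf.
    by exists (Phi P m fst ^+ 2); exists fst.
  move=> y [f [hf [ad ->]]].
  have [ad1 hc] := Phi_cmp _ _ _ _ _ hP hP1 hpos hb hm hf.1 ad.
  have h1 := le_trans (opt f hf ad1) hc.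
  have h2 : Phi P1 mh fst ^+ 2 <= (3 * Phi P m f) ^+ 2.
    by rewrite ler_sqr ?nnegrE ?Phi_ge0 ?mulr_ge0 ?Phi_ge0.
  rewrite exprMn in h2; lra.
have l0 : 0 <= lambda P m.
  apply: le_trans key; rewrite divr_ge0 // exprn_ge0 // Phi_ge0 //.
split => //.
have -> : Phi P1 mh fst = Num.sqrt (Phi P1 mh fst ^+ 2).
  by rewrite sqrtr_sqr ger0_norm // Phi_ge0.
have -> : 3 * Num.sqrt (lambda P m) = Num.sqrt (9 * lambda P m).
  rewrite sqrtrM // (_ : 9 = 3 ^+ 2); last by rewrite expr2; lra.
  by rewrite sqrtr_sqr ger0_norm.
rewrite ler_wsqrtr //; lra.
Qed.

Lemma err_term (P1 : interv n -> 'I_k -> R) (ER Rh : 'I_k -> interv n -> R)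
  (mh : 'I_k -> nat) fst (Tr L2 : R) a i b :
  (forall a i, 0 <= P1 a i) -> admissible P1 fst -> 0 < Tr -> 0 <= L2 ->
  (forall i b, 0 < Ptf P1 fst i -> `| ER i b - Rh i b |
      <= Num.sqrt (27 * (mh i)%:R / (Tr * Ptf P1 fst i) * L2)) ->
  P1 a i * `| ER i b - Rh i b | <= Num.sqrt (27 * L2 / Tr) *
     (P1 a i * Num.sqrt (mh i)%:R * (Num.sqrt (Ptf P1 fst i))^-1).
Proof.
move=> hP1 adm1 hT hL hE.
have [Pgt|Ple] := ltP 0 (P1 a i); last first.
  have -> : P1 a i = 0 by apply/eqP; rewrite eq_le Ple hP1.
  by rewrite !mul0r mulr0.
have ht := adm1 a i Pgt.
have h := hE i b ht.
have ee : 27 * (mh i)%:R / (Tr * Ptf P1 fst i) * L2 =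
    (27 * L2 / Tr) * ((mh i)%:R * (Ptf P1 fst i)^-1).
  by field; rewrite !gt_eqF.
rewrite ee in h.
have c0 : 0 <= 27 * L2 / Tr by rewrite divr_ge0 ?mulr_ge0 // ltW.
rewrite (sqrtrM _ c0) (sqrtrM _ (ler0n _ _)) (sqrtrV (ltW ht)) in h.
have -> : Num.sqrt (27 * L2 / Tr) * (P1 a i * Num.sqrt (mh i)%:R * (Num.sqrt (Ptf P1 fst i))^-1)
  = P1 a i * (Num.sqrt (27 * L2 / Tr) * (Num.sqrt (mh i)%:R * (Num.sqrt (Ptf P1 fst i))^-1)) by ring.
by rewrite ler_wpM2l // ltW.
Qed.

Lemma value_diff P (P1 : interv n -> 'I_k -> R) (ER Rh : 'I_k -> interv n -> R)
  (mh : 'I_k -> nat) fst (Tr L2 : R) a (pi : 'I_k -> interv n) :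
  (forall a i, 0 <= P a i) -> (forall a i, 0 <= P1 a i) ->
  (forall a i, 2 / 3 * P a i <= P1 a i /\ P1 a i <= 4 / 3 * P a i) ->
  (forall i b, 0 <= Rh i b <= 1) ->
  admissible P1 fst -> 0 < Tr -> 0 <= L2 ->
  (forall i b, 0 < Ptf P1 fst i -> `| ER i b - Rh i b |
      <= Num.sqrt (27 * (mh i)%:R / (Tr * Ptf P1 fst i) * L2)) ->
  `| value P ER a pi - value P1 Rh a pi | <=
     3 / 2 * Num.sqrt (27 * L2 / Tr) * Phi P1 mh fst + l1dist P1 P a.
Proof.
move=> hP hP1 hb hR adm1 hT hL hE.
rewrite /value -sumrB; apply: (le_trans (ler_norm_sum _ _ _)).
apply: (le_trans (y := \sum_(i < k) (3/2 * (Num.sqrt (27 * L2 / Tr) *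
     (P1 a i * Num.sqrt (mh i)%:R * (Num.sqrt (Ptf P1 fst i))^-1)) + `|P1 a i - P a i|))).
  apply: ler_sum => i _.
  have e := err_term P1 ER Rh mh fst Tr L2 a i (pi i) hP1 adm1 hT hL hE.
  have -> : P a i * ER i (pi i) - P1 a i * Rh i (pi i) =
     P a i * (ER i (pi i) - Rh i (pi i)) + (P a i - P1 a i) * Rh i (pi i) by ring.
  apply: (le_trans (ler_normD _ _)); apply: lerD.
    rewrite normrM (ger0_norm (hP a i)).
    have := (hb a i).1; have := normr_ge0 (ER i (pi i) - Rh i (pi i)).
    set x := `|_|; move=> hx hb1.
    have : P a i * x <= 3/2 * (P1 a i * x) by rewrite mulrA ler_wpM2r //; lra.
    move/le_trans; apply; rewrite ler_wpM2l //; lra.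
  rewrite normrM distrC; have /andP[r0 r1] := hR i (pi i).
  rewrite (ger0_norm r0).
have := normr_ge0 (P1 a i - P a i); set z := `|_|; move=> z0.
  by rewrite ler_piMr.
rewrite big_split /= lerD2r -mulr_sumr -mulr_sumr -mulrA.
rewrite -[X in _ <= X]mulrA; apply: ler_wpM2l; first lra.
apply: ler_wpM2l; [exact: sqrtr_ge0 | exact: sum_le_Phi].
Qed.

End Aux3.


Lemma sqrt_le_c (R : realType) (c X Y : R) : 0 <= c -> X <= c ^+ 2 * Y ->
  Num.sqrt X <= c * Num.sqrt Y.
Proof.
move=> hc h; rewrite -(ger0_norm hc) -sqrtr_sqr -sqrtrM ?exprn_ge0 //.
exact: ler_wsqrtr.
Qed.

Lemma interv0_eq n (hn : n = 0%N) (a b : interv n) : a = b.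
Proof.
subst n.
by case: a => [[[j ?] ?]|]; case: b => [[[j' ?] ?]|].
Qed.

Theorem corollary2 (R : realType) :
  exists C : R, 0 < C /\
  forall (n k T : nat)
    (q0 : 'I_n -> R) (q : 'I_k -> 'I_n -> R)
    (K : assignment n -> 'I_k -> R) (r : 'I_k -> assignment n -> R),
    (forall j, 0 <= q0 j <= 1) ->
    (forall i j, 0 <= q i j <= 1) ->
    (forall x i, 0 <= K x i) ->
    (forall x, \sum_(i < k) K x i = 1) ->
    (forall i x, 0 <= r i x <= 1) ->
    let P := trans q0 K in
    let ER := fun i => exp_reward (q i) (r i) in
    let m0 := mpar q0 in
    let m := fun i => mpar (q i) in
    let pp := pplus P in
    let N : R := (Nint n)%:R in
    let Tr : R := T%:R in
    forall (pistar0 : interv n) (pistar : 'I_k -> interv n),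
    (forall (a : interv n) (pi : 'I_k -> interv n),
        value P ER a pi <= value P ER pistar0 pistar) ->
    (0 < T)%N ->
    forall (P1 P3 P5 : interv n -> 'I_k -> R)
      (qh0 : 'I_n -> R) (qh3 qh5 : 'I_k -> 'I_n -> R)
      (ftil fst : interv n -> R) (Rh : 'I_k -> interv n -> R)
      (pih0 : interv n) (pih : 'I_k -> interv n),
    (forall a i, 0 <= P1 a i <= 1) ->
    (forall a i, 0 <= P3 a i <= 1) ->
    (forall a i, 0 <= P5 a i <= 1) ->
    (forall a i, 0 < P1 a i -> 0 < P a i) ->
    (forall a i, 0 < P3 a i -> 0 < P a i) ->
    (forall a i, 0 < P5 a i -> 0 < P a i) ->
    (forall j, 0 <= qh0 j <= 1) ->
    (forall i j, 0 <= qh3 i j <= 1) ->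
    (forall i j, 0 <= qh5 i j <= 1) ->
    (forall i b, 0 <= Rh i b <= 1) ->
    let mh0 := mpar qh0 in
    let mh3 := fun i => mpar (qh3 i) in
    let mh5 := fun i => mpar (qh5 i) in
    freq ftil ->
    (forall f : interv n -> R, freq f -> minPtf P1 f <= minPtf P1 ftil) ->
    freq fst -> admissible P1 fst ->
    (forall f : interv n -> R, freq f -> admissible P1 f -> Phi P1 mh3 fst <= Phi P1 mh3 f) ->
    (forall i b, Rh i b <= Rh i (pih i)) ->
    (forall a, \sum_(i < k) P1 a i * Rh i (pih i)
               <= \sum_(i < k) P1 pih0 i * Rh i (pih i)) ->
    (forall a, [/\ l1dist P1 P a <= pp / 3, l1dist P3 P a <= pp / 3
                 & l1dist P5 P a <= pp / 3]) ->
    (2 / 3 * (m0%:R : R) <= (mh0%:R : R) <= 2 * (m0%:R : R)) ->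
    (forall i, (2 / 3 * ((m i)%:R : R) <= ((mh3 i)%:R : R) <= 2 * ((m i)%:R : R)) /\
               (2 / 3 * ((m i)%:R : R) <= ((mh5 i)%:R : R) <= 2 * ((m i)%:R : R))) ->
    (forall a, l1dist P1 P a
               <= Num.sqrt (150 * m0%:R / (Tr * pp) * ln (3 * Tr / k%:R))) ->
    (forall i a, 0 < Ptf P1 fst i ->
       `| ER i a - Rh i a |
         <= Num.sqrt (27 * (mh3 i)%:R / (Tr * Ptf P1 fst i) * ln (2 * Tr * N))) ->
    value P ER pistar0 pistar - value P ER pih0 pih
      <= C * Num.sqrt (Num.max (lambda P m) (m0%:R / pp) * ln (N * Tr) / Tr).
Proof.
exists 98; split; first lra.
move=> n k T q0 q K r hq0 hq hK hKs hr P ER m0 m pp N Tr pistar0 pistar hopt hT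
  P1 P3 P5 qh0 qh3 qh5 ftil fst Rh pih0 pih hP1b hP3b hP5b hP1pos hP3pos hP5pos
  hqh0 hqh3 hqh5 hRh mh0 mh3 mh5 hftil hftilopt hfst hadm hfstopt hpih hpih0
  E1 E2 E3 E4 E5.
set M := Num.max (lambda P m) (m0%:R / pp).
set L := ln (N * Tr).
set S := Num.sqrt (M * L / Tr).
have S0 : 0 <= S by apply: sqrtr_ge0.
have [hn|hn] := posnP n.
  have e0 := interv0_eq _ hn.
  rewrite (e0 pih0 pistar0) (_ : pih = pistar); last by apply/funext => i; apply: e0.
  by rewrite subrr mulr_ge0.
have hP : forall a i, 0 <= P a i by move=> a i; apply: trans_ge0.
have hP1 : forall a i, 0 <= P1 a i by move=> a i; case/andP: (hP1b a i).
have hb : forall a i, 2 / 3 * P a i <= P1 a i /\ P1 a i <= 4 / 3 * P a i.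
  move=> a i; apply: entry_bounds => //; by case: (E1 a).
have hm : forall i, ((mh3 i)%:R : R) <= 2 * (m i)%:R.
  by move=> i; case: (E3 i) => /andP[].
have [l0 hPhi] := @lambda_bound R n k P P1 m mh3 fst hP hP1 hP1pos hb hm hfst hadm hfstopt.
have Tr1 : 1 <= Tr by rewrite /Tr ler1n.
have Tr0 : 0 < Tr by lra.
have N3 : 3 <= N by rewrite /N /Nint ler_nat; lia.
have L0 : 0 <= L by rewrite /L ln_ge0 //; nra.
have L2p : 0 <= ln (2 * Tr * N) by rewrite ln_ge0 //; nra.
have L2L : ln (2 * Tr * N) <= 2 * L.
  have -> : 2 * Tr * N = 2 * (N * Tr) by ring.
  rewrite lnM ?posrE; [|lra|nra].
  have : ln 2 <= L by rewrite /L ler_ln ?posrE; nra.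
  rewrite /L; lra.
have L1L : ln (3 * Tr / k%:R) <= L.
  have [k0|kp] := posnP k.
    rewrite k0 invr0 mulr0 ln0 //.
  have k1 : 1 <= (k%:R : R) by rewrite ler1n.
  have h1 : 0 < 3 * Tr / k%:R by rewrite divr_gt0 //; lra.
  rewrite /L ler_ln ?posrE //; last nra.
  rewrite ler_pdivrMr; last lra.
  have e1 : 0 <= (N - 3) * Tr by apply: mulr_ge0; lra.
  have e2 : 0 <= (N * Tr) * (k%:R - 1) by apply: mulr_ge0; nra.
  nra.
have pp0 : 0 <= pp by apply: pplus_ge0.
have M0 : 0 <= M by rewrite /M le_max l0.
have Mm : m0%:R / pp <= M by rewrite /M le_max lexx orbT.
have Ml : lambda P m <= M by rewrite /M le_max lexx.
set iT := Tr^-1.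
have iT0 : 0 < iT by rewrite /iT invr_gt0.
have x0 : 0 <= m0%:R / pp by rewrite divr_ge0.
have hA : forall a, l1dist P1 P a <= 13 * S.
  move=> a; apply: (le_trans (E4 a)); apply: sqrt_le_c; first lra.
  set L1 := ln _ in L1L *; set x := m0%:R / pp in x0 Mm *.
  have -> : 150 * m0%:R / (Tr * pp) * L1 = 150 * iT * x * L1 by rewrite /x /iT invfM; ring.
  have -> : M * L / Tr = M * L * iT by [].
  have h1 : 0 <= iT * x * (L - L1) by apply: mulr_ge0; [apply: mulr_ge0 => //; exact: ltW|lra].
  have h2 : 0 <= iT * L * (M - x) by apply: mulr_ge0; [apply: mulr_ge0 => //; exact: ltW|lra].
  have h3 : 0 <= iT * M * L by apply: mulr_ge0 => //; apply: mulr_ge0 => //; exact: ltW.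
  nra.
set L2 := ln (2 * Tr * N) in L2p L2L E5.
have c0 : 0 <= 27 * L2 / Tr by rewrite divr_ge0 ?mulr_ge0 // ltW.
have hB : 3 / 2 * Num.sqrt (27 * L2 / Tr) * Phi P1 mh3 fst <= 36 * S.
  apply: (le_trans (y := 3 / 2 * Num.sqrt (27 * L2 / Tr) * (3 * Num.sqrt (lambda P m)))).
    by apply: ler_wpM2l => //; rewrite mulr_ge0 ?sqrtr_ge0 //; lra.
  have -> : 3 / 2 * Num.sqrt (27 * L2 / Tr) * (3 * Num.sqrt (lambda P m)) =
     9 / 2 * (Num.sqrt (27 * L2 / Tr) * Num.sqrt (lambda P m)) by ring.
  rewrite -sqrtrM //.
  have : Num.sqrt (27 * L2 / Tr * lambda P m) <= 8 * S.
    apply: sqrt_le_c; first lra.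
    have -> : 27 * L2 / Tr * lambda P m = 27 * L2 * iT * lambda P m by [].
    have -> : M * L / Tr = M * L * iT by [].
    have h1 : 0 <= iT * lambda P m * (2 * L - L2) by apply: mulr_ge0; [apply: mulr_ge0 => //; exact: ltW|lra].
    have h2 : 0 <= iT * L * (M - lambda P m) by apply: mulr_ge0; [apply: mulr_ge0 => //; exact: ltW|lra].
    have h3 : 0 <= iT * L * lambda P m by apply: mulr_ge0 => //; apply: mulr_ge0 => //; exact: ltW.
    nra.
  lra.
have hR : forall i b, 0 <= Rh i b <= 1 by [].
have d1 := @value_diff R n k P P1 ER Rh mh3 fst Tr L2 pistar0 pistar hP hP1 hb hRh hadm Tr0 L2p E5.
have d2 := @value_diff R n k P P1 ER Rh mh3 fst Tr L2 pih0 pih hP hP1 hb hRh hadm Tr0 L2p E5.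
have mid : value P1 Rh pistar0 pistar <= value P1 Rh pih0 pih.
  apply: (le_trans _ (hpih0 pistar0)); rewrite /value; apply: ler_sum => i _.
  by apply: ler_wpM2l.
have hA1 := hA pistar0; have hA2 := hA pih0.
move: d1 d2; rewrite !ler_norml => /andP[d1 d1'] /andP[d2 d2'].
lra.
Qed.
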